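(* Let $n \ge 1$ and let $a_1, \dots, a_n$ be positive real numbers with $\sum_{i=1}^n a_i = 1$. Consider vectors $u_{(i,t)}$ indexed by $(i,t) \in [n] \times [3]$ subject to the following constraints: (1) $u_{(i,t)} \cdot u_{(i,t)} = 1$ for all $(i,t)$; (2) $u_{(i,1)} \cdot u_{(i,2)} = 0$ for all $i \in [n]$; (3) $u_{(i,3)} \cdot u_{(i,1)} = u_{(i,3)} \cdot u_{(i,2)} = \frac{1}{\sqrt{2}}$ for all $i \in [n]$; (4) $u_{(i,1)} \cdot u_{(i+1,1)} = u_{(i,2)} \cdot u_{(i+1,2)} = u_{(i,3)} \cdot u_{(i+1,3)} = \cos a_i$ for all $i \in [n]$, where the index $i+1$ is taken modulo $n$ (so $n+1$ means $1$). Then there exists a family of vectors in $\mathbb{R}^3$ satisfying these constraints if and only if there exists a family of vectors in $\mathbb{R}^2$ satisfying these constraints. *)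

(* Defs.v *)
From mathcomp Require Import all_boot all_order all_algebra.
From mathcomp Require Import all_classical all_reals all_analysis.
Set Implicit Arguments. Unset Strict Implicit. Unset Printing Implicit Defensive.
Import Order.TTheory GRing.Theory Num.Theory.
Local Open Scope ring_scope.

Definition dotv (R : realType) (d : nat) (u v : 'rV[R]_d) : R :=
  \sum_(k < d) u 0 k * v 0 k.

(* Indices t in [3] = {1,2,3} are represented by 'I_3 = {0,1,2}. *)
Definition t1 : 'I_3 := @Ordinal 3 0 isT.
Definition t2 : 'I_3 := @Ordinal 3 1 isT.
Definition t3 : 'I_3 := @Ordinal 3 2 isT.

(* The constraints (1)-(4) on a family u_(i,t), i in [n] (as 'I_n), t in [3].
   The successor i+1 mod n is [ordS i]. *)
Definition feasible (R : realType) (n : nat) (a : 'I_n -> R) (d : nat)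
    (u : 'I_n -> 'I_3 -> 'rV[R]_d) : Prop :=
  [/\ (forall i t, dotv (u i t) (u i t) = 1),
      (forall i, dotv (u i t1) (u i t2) = 0),
      (forall i, dotv (u i t3) (u i t1) = (Num.sqrt 2)^-1 /\
                 dotv (u i t3) (u i t2) = (Num.sqrt 2)^-1) &
      (forall i, [/\ dotv (u i t1) (u (ordS i) t1) = cos (a i),
                     dotv (u i t2) (u (ordS i) t2) = cos (a i) &
                     dotv (u i t3) (u (ordS i) t3) = cos (a i)])].

(* Main.v *)
Require Import Defs.
From mathcomp Require Import all_boot all_order all_algebra.
From mathcomp Require Import all_classical all_reals all_analysis.
From mathcomp Require Import ring lra.
Set Implicit Arguments. Unset Strict Implicit.
Import Order.TTheory GRing.Theory Num.Theory.
Local Open Scope ring_scope.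

Section Aux.
Variable R : realType.

Lemma dotvC d (u v : 'rV[R]_d) : dotv u v = dotv v u.
Proof. by rewrite /dotv; apply: eq_bigr => k _; rewrite mulrC. Qed.

Lemma dotvDl d (u v w : 'rV[R]_d) : dotv (u + v) w = dotv u w + dotv v w.
Proof. by rewrite /dotv -big_split; apply: eq_bigr => k _; rewrite !mxE mulrDl. Qed.

Lemma dotvZl d k (u w : 'rV[R]_d) : dotv (k *: u) w = k * dotv u w.
Proof. by rewrite /dotv mulr_sumr; apply: eq_bigr => j _; rewrite !mxE mulrA. Qed.

Lemma dotvDr d (u v w : 'rV[R]_d) : dotv w (u + v) = dotv w u + dotv w v.
Proof. by rewrite !(dotvC w) dotvDl. Qed.

Lemma dotvZr d k (u w : 'rV[R]_d) : dotv w (k *: u) = k * dotv w u.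
Proof. by rewrite !(dotvC w) dotvZl. Qed.

Lemma dotv_eq0 d (z : 'rV[R]_d) : dotv z z = 0 -> z = 0.
Proof.
move=> /eqP; rewrite /dotv psumr_eq0 => [/allP H|k _]; last by rewrite -expr2 sqr_ge0.
apply/rowP => k; rewrite mxE.
have := H k (mem_index_enum _); rewrite -expr2 sqrf_eq0 => /eqP //.
Qed.

Lemma sum3 (F : 'I_3 -> R) : \sum_(k < 3) F k = F t1 + F t2 + F t3.
Proof.
by rewrite !big_ord_recr big_ord0 /= add0r; congr (_ + _ + _); congr F; apply/val_inj.
Qed.

Lemma ord3P (i : 'I_3) : [\/ i = t1, i = t2 | i = t3].
Proof.
case: i => [[|[|[|m]]] Hm]; last by [].
- by apply: Or31; apply/val_inj.
- by apply: Or32; apply/val_inj.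
- by apply: Or33; apply/val_inj.
Qed.

Definition cross (u v : 'rV[R]_3) : 'rV[R]_3 :=
  \row_j (if j == t1 then u 0 t2 * v 0 t3 - u 0 t3 * v 0 t2
          else if j == t2 then u 0 t3 * v 0 t1 - u 0 t1 * v 0 t3
          else u 0 t1 * v 0 t2 - u 0 t2 * v 0 t1).

Lemma cross_lag (u v : 'rV[R]_3) :
  dotv (cross u v) (cross u v) = dotv u u * dotv v v - dotv u v ^+ 2.
Proof. rewrite /dotv !sum3 /cross !mxE /=; ring. Qed.

Lemma cross_l (u v : 'rV[R]_3) : dotv u (cross u v) = 0.
Proof. rewrite /dotv !sum3 /cross !mxE /=; ring. Qed.

Lemma cross_r (u v : 'rV[R]_3) : dotv v (cross u v) = 0.
Proof. rewrite /dotv !sum3 /cross !mxE /=; ring. Qed.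


Lemma decomp (u1 u2 : 'rV[R]_3) :
  dotv u1 u1 = 1 -> dotv u2 u2 = 1 -> dotv u1 u2 = 0 ->
  forall v, v = dotv v u1 *: u1 + dotv v u2 *: u2 + dotv v (cross u1 u2) *: cross u1 u2.
Proof.
move=> h11 h22 h12 v.
set w := cross u1 u2.
have hww : dotv w w = 1 by rewrite cross_lag h11 h22 h12; ring.
have h1w : dotv u1 w = 0 by apply: cross_l.
have h2w : dotv u2 w = 0 by apply: cross_r.
clearbody w.
pose rowF (i : 'I_3) := if i == t1 then u1 else if i == t2 then u2 else w.
pose F := \matrix_(i < 3, j < 3) rowF i 0 j.
have FF : F *m F^T = 1%:M.
  apply/matrixP => i j; rewrite !mxE.
  have -> : \sum_j0 F i j0 * F^T j0 j = dotv (rowF i) (rowF j).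
    by apply: eq_bigr => k _; rewrite !mxE.
  by case: (ord3P i) => ->; case: (ord3P j) => ->; rewrite /rowF /=;
    rewrite ?h11 ?h22 ?h12 ?hww ?h1w ?h2w ?(dotvC u2 u1) ?(dotvC w u1) ?(dotvC w u2) ?h12 ?h1w ?h2w.
have FF' := mulmx1C FF.
apply/rowP => j.
have -> : v 0 j = (v *m (F^T *m F)) 0 j by rewrite FF' mulmx1.
rewrite mulmxA mxE sum3.
have E : forall k, (v *m F^T) 0 k = dotv v (rowF k).
  by move=> k; rewrite !mxE; apply: eq_bigr => l _; rewrite !mxE.
have EF : forall k, F k j = rowF k 0 j by move=> k; rewrite mxE.
by rewrite !E !EF /rowF /= !mxE.
Qed.


Lemma step (u1 u2 v1 v2 : 'rV[R]_3) c p :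
  dotv u1 u1 = 1 -> dotv u2 u2 = 1 -> dotv u1 u2 = 0 ->
  dotv v1 v1 = 1 -> dotv v2 v2 = 1 -> dotv v1 v2 = 0 ->
  dotv u1 v1 = c -> dotv u2 v2 = c -> dotv u1 v2 = p -> dotv u2 v1 = - p ->
  v1 = c *: u1 + (- p) *: u2 /\ v2 = p *: u1 + c *: u2.
Proof.
move=> h11 h22 h12 g11 g22 g12 e1 e2 e3 e4.
have D := decomp h11 h22 h12.
set w := cross u1 u2 in D.
have Ev1 := D v1; have Ev2 := D v2.
rewrite !(dotvC v1 u1) !(dotvC v1 u2) e1 e4 in Ev1.
rewrite !(dotvC v2 u1) !(dotvC v2 u2) e2 e3 in Ev2.
set x := dotv v1 w in Ev1; set y := dotv v2 w in Ev2.
have q1 : c * c + p * p + x * x = 1.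
  by rewrite -g11 {2}Ev1 !dotvDr !dotvZr (dotvC v1 u1) (dotvC v1 u2) e1 e4 -/x; ring.
have q2 : c * c + p * p + y * y = 1.
  by rewrite -g22 {2}Ev2 !dotvDr !dotvZr (dotvC v2 u1) (dotvC v2 u2) e2 e3 -/y; ring.
have q3 : x * y = 0.
  by rewrite -g12 Ev2 !dotvDr !dotvZr (dotvC v1 u1) (dotvC v1 u2) e1 e4 -/x; ring.
have xy : x * x = y * y by apply: (addrI (c * c + p * p)); rewrite q1 q2.
have x4 : (x * x) * (x * x) = 0 by rewrite {2}xy mulrACA q3 mulr0.
have x0 : x = 0 by move/eqP: x4; rewrite !mulf_eq0 !orbb => /eqP.
have y0 : y = 0 by move: xy; rewrite x0 mulr0 => /esym/eqP; rewrite mulf_eq0 orbb => /eqP.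
rewrite x0 in Ev1; rewrite y0 in Ev2.
by rewrite scale0r addr0 in Ev1; rewrite scale0r addr0 in Ev2.
Qed.

Lemma third (u1 u2 u3 : 'rV[R]_3) :
  dotv u1 u1 = 1 -> dotv u2 u2 = 1 -> dotv u3 u3 = 1 -> dotv u1 u2 = 0 ->
  dotv u3 u1 = (Num.sqrt 2)^-1 -> dotv u3 u2 = (Num.sqrt 2)^-1 ->
  u3 = (Num.sqrt 2)^-1 *: (u1 + u2).
Proof.
move=> h11 h22 h33 h12 h31 h32.
set s := (Num.sqrt (2:R))^-1 in h31 h32 *.
have s2 : s * s = 2^-1 by rewrite /s -invfM -expr2 sqr_sqrtr.
apply/eqP; rewrite -subr_eq0; apply/eqP/dotv_eq0.
rewrite -scaleN1r !(dotvDl, dotvDr, dotvZl, dotvZr) (dotvC u1 u3) (dotvC u2 u3) (dotvC u2 u1).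
rewrite h11 h22 h33 h12 h31 h32.
apply: (@eq_trans _ _ (1 - 2 * (s * s))); first ring.
by rewrite s2 mulfV ?subrr // pnatr_eq0.
Qed.


Definition pad (u : 'rV[R]_2) : 'rV[R]_3 :=
  \row_(j < 3) (if j == t3 then 0 else u 0 (inord j)).

Lemma dot_pad (u v : 'rV[R]_2) : dotv (pad u) (pad v) = dotv u v.
Proof.
rewrite /dotv sum3 !big_ord_recr big_ord0 /= !mxE /= mulr0 add0r addr0.
by congr (_ * _ + _ * _); congr (_ 0 _); apply/val_inj; rewrite /= inordK.
Qed.

End Aux.

Theorem lemma3p1 (R : realType) (n : nat) (a : 'I_n -> R) :
  (0 < n)%N ->
  (forall i, 0 < a i) ->
  \sum_(i < n) a i = 1 ->
  (exists u : 'I_n -> 'I_3 -> 'rV[R]_3, feasible a u) <->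
  (exists u : 'I_n -> 'I_3 -> 'rV[R]_2, feasible a u).
Proof.
move=> n0 _ _; split; last first.
  case=> u [h1 h2 h3 h4]; exists (fun i t => pad (u i t)); split=> *; rewrite ?dot_pad; auto.
case=> u [h1 h2 h3 h4].
set s := (Num.sqrt (2:R))^-1 in h3 *.
have s2 : s * s = 2^-1 by rewrite /s -invfM -expr2 sqr_sqrtr.
have U3 : forall i, u i t3 = s *: (u i t1 + u i t2).
  move=> i; have [h31 h32] := h3 i; exact: third.
have hpq : forall i, dotv (u i t2) (u (ordS i) t1) = - dotv (u i t1) (u (ordS i) t2).
  move=> i; have [c1 c2 c3] := h4 i.
  move: c3; rewrite !U3 !(dotvZl, dotvZr, dotvDl, dotvDr) c1 c2 => c3.
  set p := dotv (u i t1) (u (ordS i) t2) in c3 *.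
  set q := dotv (u i t2) (u (ordS i) t1) in c3 *.
  set c := cos (a i) in c3 *.
  have : (s * s) * (c + p + (q + c)) = c by rewrite -[RHS]c3; ring.
  rewrite s2 => e; lra.
set i0 := Ordinal n0.
set w0 := cross (u i0 t1) (u i0 t2).
have stp : forall i, dotv (u i t1) w0 = 0 -> dotv (u i t2) w0 = 0 ->
    dotv (u (ordS i) t1) w0 = 0 /\ dotv (u (ordS i) t2) w0 = 0.
  move=> i e1 e2; have [c1 c2 c3] := h4 i.
  have [-> ->] := step (h1 i t1) (h1 i t2) (h2 i) (h1 (ordS i) t1) (h1 (ordS i) t2) (h2 (ordS i))
     c1 c2 (erefl _) (hpq i).
  by rewrite !(dotvDl, dotvZl) e1 e2 !mulr0 addr0.
have all12 : forall i, dotv (u i t1) w0 = 0 /\ dotv (u i t2) w0 = 0.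
  have H : forall k (hk : (k < n)%N), dotv (u (Ordinal hk) t1) w0 = 0 /\ dotv (u (Ordinal hk) t2) w0 = 0.
    elim=> [|k IH] hk.
      have -> : Ordinal hk = i0 by apply/val_inj.
      by split; [apply: cross_l | apply: cross_r].
    have hk' : (k < n)%N := ltnW hk.
    have -> : Ordinal hk = ordS (Ordinal hk') by apply/val_inj; rewrite /= modn_small.
    by have [] := IH hk'; apply: stp.
  by case=> k hk; apply: H.
have allt : forall i t, dotv (u i t) w0 = 0.
  move=> i t; have [e1 e2] := all12 i.
  by case: (ord3P t) => ->; rewrite ?U3 ?(dotvDl, dotvZl) ?e1 ?e2 ?addr0 ?mulr0.
have D := decomp (h1 i0 t1) (h1 i0 t2) (h2 i0).
have key : forall x y, dotv y w0 = 0 ->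
    dotv x y = dotv x (u i0 t1) * dotv y (u i0 t1) + dotv x (u i0 t2) * dotv y (u i0 t2).
  move=> x y hy; rewrite {1}(D y) -/w0 !(dotvDr, dotvZr) hy mul0r addr0; ring.
pose u2d i t : 'rV[R]_2 := \row_(j < 2)
   (if val j == 0%N then dotv (u i t) (u i0 t1) else dotv (u i t) (u i0 t2)).
have d2 : forall i t i' t', dotv (u2d i t) (u2d i' t') = dotv (u i t) (u i' t').
  move=> i t i' t'; rewrite (key _ _ (allt i' t')) [LHS]/dotv !big_ord_recr big_ord0 /= !mxE /= add0r.
  done.
exists u2d; split=> *; rewrite ?d2; auto.
Qed.
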